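(* Let $\mathbf{x}_1,\ldots,\mathbf{x}_n\in\mathbb{S}^{d-1}$ be distinct. Then the matrix $\mathbf{H}^\infty\in\mathbb{R}^{n\times n}$ with entries $$H^\infty_{ij}=\frac{(\mathbf{x}_i^\top\mathbf{x}_j+1)\,(\pi-\arccos(\mathbf{x}_i^\top\mathbf{x}_j))}{4\pi}$$ is symmetric and positive definite.
   Context: $d\ge 2$ and $\mathbb{S}^{d-1}\subset\mathbb{R}^d$ is the unit sphere. Equivalently, $H^\infty_{ij}=\mathbb{E}_{\mathbf{w}\sim\mathcal{N}(\mathbf{0},\kappa^2\mathbf{I})}\big[\tfrac{\mathbf{x}_i^\top\mathbf{x}_j+1}{2}\,\mathbb{I}_{\{\mathbf{w}^\top\mathbf{x}_i\ge 0,\ \mathbf{w}^\top\mathbf{x}_j\ge 0\}}\big]$ for any $\kappa>0$. No assumption is made excluding antipodal pairs $\mathbf{x}_i=-\mathbf{x}_j$. *)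

(* Defs.v *)
From mathcomp Require Import all_boot all_order all_algebra.
From mathcomp Require Import all_classical all_reals all_analysis.
Set Implicit Arguments. Unset Strict Implicit. Unset Printing Implicit Defensive.
Import Order.TTheory GRing.Theory Num.Theory.
Local Open Scope ring_scope.

Definition dotv (R : realType) (d : nat) (u v : 'rV[R]_d) : R :=
  \sum_(k < d) u 0 k * v 0 k.

Definition on_sphere (R : realType) (d : nat) (u : 'rV[R]_d) : Prop :=
  dotv u u = 1.

Definition Hinf (R : realType) (n d : nat) (x : 'I_n -> 'rV[R]_d) : 'M[R]_n :=
  \matrix_(i < n, j < n)
    ((dotv (x i) (x j) + 1) * (pi - acos (dotv (x i) (x j))) / (4 * pi)).

Definition symmetric_mx (R : realType) (n : nat) (A : 'M[R]_n) : Prop :=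
  A^T = A.

Definition posdef_mx (R : realType) (n : nat) (A : 'M[R]_n) : Prop :=
  forall v : 'cV[R]_n, v != 0 -> 0 < (v^T *m A *m v) 0 0.

(* Main.v *)
Require Import Defs.
From mathcomp Require Import all_boot all_order all_algebra.
From mathcomp Require Import all_classical all_reals all_analysis.
From mathcomp Require Import ring lra zify.
Import Order.TTheory GRing.Theory Num.Theory.
Local Open Scope ring_scope.
Set Implicit Arguments. Unset Strict Implicit.
Section S.
Variable R : realType.
Lemma term_der (n : nat) (k x : R) : is_derive x 1 (fun y : R => k * (sin y * cos y ^+ n))
   (k * (cos x ^+ n.+1 - n%:R * (1 - cos x ^+ 2) * cos x ^+ n.-1)).
Proof.
have H : is_derive x 1 (k *: (sin * cos ^+ n)) (k *: ((sin x) *: ((n%:R * cos x ^+ n.-1) *: - sin x) + (cos ^+ n) x *: cos x)) by exact: _.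
have -> : (fun y : R => k * (sin y * cos y ^+ n)) = k *: (sin * cos ^+ n).
  by rewrite scalrfctE mulrfctE exprfctE.
apply: is_derive_eq.
rewrite /= -(sin2cos2 x) /GRing.scale /= exprfctE.
case: n {H} => [|n] /=; first by rewrite expr0 expr1; ring.
rewrite exprS; rewrite [cos x ^+ n.+2]exprS exprS; ring.
Qed.
Lemma term_der2 (n : nat) (k x : R) : is_derive x 1 (fun y : R => k * cos y ^+ n.+1)
   (- (k * (n.+1)%:R * (sin x * cos x ^+ n))).
Proof.
have H : is_derive x 1 (k *: (cos ^+ n.+1)) (k *: (((n.+1)%:R * cos x ^+ n) *: - sin x)) by exact: _.
have -> : (fun y : R => k * cos y ^+ n.+1) = k *: (cos ^+ n.+1).
  by rewrite scalrfctE exprfctE.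
apply: is_derive_eq.
rewrite /GRing.scale /=; ring.
Qed.

Fixpoint bc (m : nat) : R := match m with 0%N => 1 | m'.+1 => bc m' * (m'.*2.+1)%:R / (m'.*2.+2)%:R end.
Definition cc (m : nat) : R := bc m / (m.*2.+1)%:R.
Definition chi (M : nat) (x : R) : R := \sum_(m < M) bc m * (sin x * cos x ^+ m.*2).
Definition FM (M : nat) (t : R) : R := \sum_(m < M) cc m * t ^+ m.*2.+1.
Definition Gf (M : nat) (x : R) : R := pi / 2 - x - FM M (cos x).

Lemma bc_ge0 m : 0 <= bc m.
Proof. elim: m => [|m IH] //=; by rewrite divr_ge0 ?mulr_ge0. Qed.
Lemma bc_gt0 m : 0 < bc m.
Proof. elim: m => [|m IH] //=; by rewrite divr_gt0 ?mulr_gt0 ?ltr0n. Qed.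
Lemma cc_gt0 m : 0 < cc m.
Proof. by rewrite /cc divr_gt0 ?bc_gt0 ?ltr0n. Qed.
Lemma bc_le1 m : bc m <= 1.
Proof.
elim: m => [|m IH] //=; rewrite -mulrA (le_trans _ IH) // ler_piMr ?bc_ge0 //.
by rewrite ler_pdivrMr ?ltr0n // mul1r ler_nat.
Qed.

Lemma chi_der (M : nat) (x : R) : is_derive x 1 (chi M) ((M.*2)%:R * bc M * cos x ^+ (M.*2).-1).
Proof.
elim: M => [|M IH].
  have -> : chi 0 = cst 0 by apply/funext => y; rewrite /chi big_ord0.
  by apply: is_derive_eq; rewrite mul0r mul0r.
have -> : chi M.+1 = chi M + (fun y => bc M * (sin y * cos y ^+ M.*2)).
  by apply/funext => y; rewrite /chi big_ord_recr.
apply: (is_derive_eq (is_deriveD IH (term_der _ _ _))).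
case: M {IH} => [|M] /=.
  rewrite ?doubleS ?double0 ?expr0 ?expr1 /=; by field.
have hm : 0 <= (M.*2)%:R :> R by [].
rewrite !doubleS !exprS !mulrS.
field; apply/andP; split; apply: lt0r_neq0; lra.
Qed.

Lemma FMcos_der (M : nat) (x : R) : is_derive x 1 (fun y => FM M (cos y)) (- chi M x).
Proof.
elim: M => [|M IH].
  have -> : (fun y => FM 0 (cos y)) = cst 0 by apply/funext => y; rewrite /FM big_ord0.
  by apply: is_derive_eq; rewrite /chi big_ord0 oppr0.
have -> : (fun y => FM M.+1 (cos y)) = (fun y => FM M (cos y)) + (fun y => cc M * cos y ^+ M.*2.+1).
  by apply/funext => y; rewrite /FM big_ord_recr.
apply: (is_derive_eq (is_deriveD IH (term_der2 _ _ _))).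
rewrite /chi big_ord_recr /= /cc opprD; congr (_ - _).
have hm : 0 <= (M.*2)%:R :> R by [].
by field; apply: lt0r_neq0; lra.
Qed.

Lemma Gf_der (M : nat) (x : R) : is_derive x 1 (Gf M) (chi M x - 1).
Proof.
have -> : Gf M = cst (pi/2) - id - (fun y => FM M (cos y)) by apply/funext => y.
have H := is_deriveB (is_deriveB (is_derive_cst (pi/2) x 1) (is_derive_id x 1)) (FMcos_der M x).
apply: (is_derive_eq H); ring.
Qed.

Lemma mvt (f df : R -> R) (a b : R) : a <= b -> (forall x : R, is_derive x 1 f (df x)) ->
  exists2 c, a <= c <= b & f b - f a = df c * (b - a).
Proof.
move=> ab H.
have [|c cab E] := @MVT_segment R f df a b ab (fun x _ => H x).
  apply: derivable_within_continuous => y _.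
  exact: (@ex_derive _ _ _ _ _ _ _ (H y)).
by exists c => //; move: cab; rewrite in_itv.
Qed.
Lemma pi2_ge0 : 0 <= pi / 2 :> R.
Proof. by rewrite divr_ge0 // ltW // pi_gt0. Qed.
Lemma pi2_lepi : pi / 2 <= pi :> R.
Proof. have := @pi_gt0 R; lra. Qed.

Lemma chi_pihalf (M : nat) : (0 < M)%N -> chi M (pi / 2) = 1.
Proof.
case: M => // M _; rewrite /chi big_ord_recl /= sin_pihalf cos_pihalf expr0 !mulr1.
rewrite big1 ?addr0 // => i _; by rewrite /bump /= doubleS expr0n /= !mulr0.
Qed.

Lemma Gf_pihalf (M : nat) : Gf M (pi / 2) = 0.
Proof.
rewrite /Gf /FM cos_pihalf big1 ?subrr ?subr0 // => i _.
by rewrite expr0n /= mulr0.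
Qed.

Lemma cos_mono (x c : R) : 0 <= x -> x <= c -> c <= pi -> cos c <= cos x.
Proof.
move=> x0 xc cpi; rewrite leNgt ltr_cos ?in_itv /= -?leNgt ?x0 ?(le_trans xc) //.
by rewrite (le_trans x0).
Qed.

Lemma chi_ge0 (M : nat) (x : R) : 0 <= x <= pi -> 0 <= chi M x.
Proof.
move=> hx; rewrite /chi sumr_ge0 // => i _.
by rewrite mulr_ge0 ?bc_ge0 // mulr_ge0 ?sin_ge0_pi // exprn_even_ge0 // odd_double.
Qed.
Lemma chi_le1 (M : nat) (x : R) : 0 <= x -> x <= pi / 2 -> chi M x <= 1.
Proof.
move=> x0 xp; case: M => [|M]; first by rewrite /chi big_ord0 ler01.
have [c /andP[xc cp] E] := mvt xp (chi_der M.+1).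
rewrite chi_pihalf // in E.
have hc : 0 <= cos c by apply: cos_ge0_pihalf; have := pi2_ge0; lra.
have hD : 0 <= (M.+1.*2)%:R * bc M.+1 * cos c ^+ (M.+1.*2).-1.
  by rewrite !mulr_ge0 ?bc_ge0 ?exprn_ge0.
have : 0 <= (M.+1.*2)%:R * bc M.+1 * cos c ^+ (M.+1.*2).-1 * (pi / 2 - x).
  by rewrite mulr_ge0 // subr_ge0.
lra.
Qed.

Lemma chi_gap (M : nat) (x r : R) : (0 < M)%N -> 0 <= x -> x <= pi / 2 -> cos x <= r ->
  1 - chi M x <= (M.*2)%:R * r ^+ (M.*2).-1 * (pi / 2).
Proof.
move=> M0 x0 xp cr.
have [c /andP[xc cp] E] := mvt xp (chi_der M).
rewrite chi_pihalf // in E; rewrite E.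
have hc : 0 <= cos c by apply: cos_ge0_pihalf; have := pi2_ge0; lra.
have hcr : cos c <= r by apply: le_trans cr; apply: cos_mono => //; apply: le_trans pi2_lepi.
apply: ler_pM.
- by rewrite !mulr_ge0 ?bc_ge0 ?exprn_ge0.
- by rewrite subr_ge0.
- rewrite -mulrA ler_wpM2l // -[r ^+ _]mul1r; apply: ler_pM; rewrite ?bc_ge0 ?exprn_ge0 ?bc_le1 //.
  by rewrite lerXn2r // ?nnegrE // (le_trans hc).
- have := pi2_ge0; lra.
Qed.

Lemma Gf_ge0 (M : nat) (x : R) : 0 <= x -> x <= pi / 2 -> 0 <= Gf M x.
Proof.
move=> x0 xp.
have [c /andP[xc cp] E] := mvt xp (Gf_der M).
rewrite Gf_pihalf in E.
have h1 : chi M c <= 1 by apply: chi_le1 => //; apply: le_trans xc.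
have : (chi M c - 1) * (pi / 2 - x) <= 0 by rewrite mulr_le0_ge0 // ?subr_le0 ?subr_ge0.
lra.
Qed.

Lemma Gf_ub (M : nat) (x r : R) : (0 < M)%N -> 0 <= x -> x <= pi / 2 -> cos x <= r ->
  Gf M x <= (M.*2)%:R * r ^+ (M.*2).-1 * (pi / 2) * (pi / 2).
Proof.
move=> M0 x0 xp cr.
have [c /andP[xc cp] E] := mvt xp (Gf_der M).
rewrite Gf_pihalf in E.
have c0 : 0 <= c by apply: le_trans xc.
have h1 : chi M c <= 1 by apply: chi_le1.
have hcr : cos c <= r by apply: le_trans cr; apply: cos_mono => //; apply: le_trans pi2_lepi.
have h2 := chi_gap M0 c0 cp hcr.
have -> : Gf M x = (1 - chi M c) * (pi / 2 - x) by lra.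
apply: ler_pM => //; rewrite ?subr_ge0 //; have := pi2_ge0; lra.
Qed.
Definition Psi (M : nat) (t : R) : R := pi / 2 - acos t - FM M t.
Definition Bnd (M : nat) (r : R) : R := (M.*2)%:R * r ^+ (M.*2).-1 * (pi / 2) * (pi / 2).

Lemma acos_le_pi2 (t : R) : 0 <= t -> t <= 1 -> acos t <= pi / 2.
Proof.
move=> t0 t1; have tI : t \in `[(-1), 1] by rewrite in_itv /= t1 andbT; lra.
rewrite leNgt; apply/negP => H.
have : cos (acos t) < cos (pi / 2).
  rewrite ltr_cos ?H // in_itv /= ?acos_ge0 ?acos_lepi ?pi2_ge0 ?pi2_lepi //; lra.
rewrite acosK // cos_pihalf; lra.
Qed.

Lemma Psi_Gf (M : nat) (t : R) : 0 <= t -> t <= 1 -> Psi M t = Gf M (acos t).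
Proof.
move=> t0 t1; have tI : t \in `[(-1), 1] by rewrite in_itv /= t1 andbT; lra.
by rewrite /Psi /Gf acosK.
Qed.

Lemma FM_odd (M : nat) (t : R) : FM M (- t) = - FM M t.
Proof.
rewrite /FM -sumrN; apply: eq_bigr => i _.
by rewrite exprNn -signr_odd /= odd_double /= expr1 mulN1r mulrN.
Qed.

Lemma Psi_odd (M : nat) (t : R) : -1 <= t -> t <= 1 -> Psi M (- t) = - Psi M t.
Proof.
move=> t0 t1; rewrite /Psi acosN ?t0 ?t1 // FM_odd; lra.
Qed.

Lemma Psi1_ge0 (M : nat) : 0 <= Psi M 1.
Proof.
rewrite Psi_Gf ?ler01 //; apply: Gf_ge0; first by rewrite acos1.
by rewrite acos1 pi2_ge0.
Qed.

Lemma Psi_bound (M : nat) (t r : R) : (0 < M)%N -> -1 <= t -> t <= 1 -> `|t| <= r ->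
  `|Psi M t| <= Bnd M r.
Proof.
move=> M0 t0 t1 tr.
wlog tp : t t0 t1 tr / 0 <= t.
  move=> W; case: (lerP 0 t) => [|tn]; first exact: W.
  rewrite -[t]opprK Psi_odd ?normrN; last 2 first.
  - lra.
  - lra.
  by apply: W; rewrite ?normrN //; lra.
rewrite Psi_Gf // ger0_norm; last by apply: Gf_ge0; rewrite ?acos_ge0 ?acos_le_pi2 //; lra.
apply: Gf_ub => //; rewrite ?acos_ge0 ?acos_le_pi2 //; try lra.
rewrite acosK ?in_itv /= ?t1 ?andbT; last lra.
by rewrite -(ger0_norm tp).
Qed.
Lemma bernoulli (h : R) (K : nat) : 0 <= h -> 1 + K%:R * h <= (1 + h) ^+ K.
Proof.
move=> h0; elim: K => [|K IH]; first by rewrite mul0r addr0 expr0.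
rewrite exprS -natr1.
have hK : 0 <= K%:R * h by rewrite mulr_ge0.
nra.
Qed.

Lemma small_seq (r eps : R) (N : nat) : 0 <= r -> r < 1 -> 0 < eps ->
  exists M : nat, (N < M)%N /\ M%:R * r ^+ (M.*2).-1 <= eps.
Proof.
move=> r0 r1 e0.
case: (eqVneq r 0) => [->|rn0].
  exists N.+1; split => //; rewrite doubleS /= expr0n /= mulr0; exact: ltW.
have rp : 0 < r by rewrite lt_def rn0.
set h := r^-1 - 1.
have hp : 0 < h by rewrite /h subr_gt0 invf_gt1.
have rh : r * (1 + h) = 1 by rewrite /h addrC subrK divff.
set K := maxn N.+1 (Num.bound (2 / (eps * h ^+ 2))).
have KN : (N < K)%N by rewrite leq_max leqnn.
have Kb : 2 / (eps * h ^+ 2) <= K%:R.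
  apply: ltW; apply: lt_le_trans (archi_boundP _) _.
    by apply: divr_ge0 => //; apply: ltW; rewrite mulr_gt0 // exprn_gt0.
  by rewrite ler_nat leq_max leqnn orbT.
exists (K.*2); split; first by rewrite -addnn (leq_trans KN) // leq_addr.
have K1 : (0 < K)%N by apply: leq_ltn_trans KN.
have e1 : r ^+ (K.*2).*2.-1 <= r ^+ K.*2.
  apply: ler_wiXn2l => //; [exact: ltW | rewrite -!muln2; lia].
have hb := bernoulli K (ltW hp).
set a := r ^+ K.
have a0 : 0 <= a by rewrite exprn_ge0.
have ab : a * (1 + K%:R * h) <= 1.
  by apply: le_trans (ler_wpM2l a0 hb) _; rewrite /a -exprMn rh expr1n.
apply: le_trans (ler_wpM2l (ler0n R (K.*2)) e1) _.
have -> : r ^+ K.*2 = a ^+ 2 by rewrite -addnn exprD expr2.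
have Kp : 0 < K%:R :> R by rewrite ltr0n.
have Kb' : 2 <= K%:R * (eps * h ^+ 2).
  by rewrite -ler_pdivrMr // mulr_gt0 // exprn_gt0.
have hK : 0 < K%:R * h by rewrite mulr_gt0.
have aKh : a * (K%:R * h) <= 1 by nra.
have aKh2 : (a * (K%:R * h)) ^+ 2 <= 1.
  by rewrite expr_le1 // mulr_ge0 // ltW.
rewrite -mul2n natrM.
apply: le_trans (_ : 2%:R * K%:R * a ^+ 2 <= eps * (a * (K%:R * h)) ^+ 2 ) _.
  rewrite exprMn exprMn.
  have : 0 <= K%:R * a ^+ 2 by rewrite mulr_ge0 // exprn_ge0.
  nra.
by rewrite -[X in _ <= X]mulr1 ler_wpM2l // ltW.
Qed.
End S.

Section G.
Variable R : realType.
Lemma gram_quad (F : finType) n (w : 'I_n -> R) (psi : 'I_n -> F -> R) :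
  \sum_i \sum_j w i * w j * (\sum_f psi i f * psi j f) = \sum_f (\sum_i w i * psi i f) ^+ 2.
Proof.
under eq_bigr do under eq_bigr do rewrite mulr_sumr.
under eq_bigr do rewrite exchange_big /=.
rewrite exchange_big /=; apply: eq_bigr => f _.
rewrite expr2 big_distrlr /=; apply: eq_bigr => i _; apply: eq_bigr => j _; ring.
Qed.

Lemma gram_ker (F : finType) n (w : 'I_n -> R) (psi : 'I_n -> F -> R) :
  \sum_f (\sum_i w i * psi i f) ^+ 2 = 0 ->
  forall j, \sum_i w i * (\sum_f psi j f * psi i f) = 0.
Proof.
move=> H j.
have Z : forall f, \sum_i w i * psi i f = 0.
  move=> f; apply/eqP; rewrite -sqrf_eq0; apply/eqP.
  by apply: (psumr_eq0P _ H) => // g _; exact: sqr_ge0.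
under eq_bigr do rewrite mulr_sumr.
rewrite exchange_big /= big1 // => f _.
rewrite (eq_bigr (fun i => psi j f * (w i * psi i f))); last by move=> i _; ring.
by rewrite -mulr_sumr Z mulr0.
Qed.

Lemma pow_gram d (u v : 'rV[R]_d) k :
  dotv u v ^+ k = \sum_(f : {ffun 'I_k -> 'I_d}) (\prod_l u 0 (f l)) * (\prod_l v 0 (f l)).
Proof.
have <- : \prod_(l < k) dotv u v = dotv u v ^+ k by rewrite prodr_const card_ord.
rewrite /dotv bigA_distr_bigA /=; apply: eq_bigr => f _; by rewrite -big_split.
Qed.

Definition Pk n d (x : 'I_n -> 'rV[R]_d) (w : 'I_n -> R) k :=
  \sum_i \sum_j w i * w j * dotv (x i) (x j) ^+ k.

Lemma Pk_gram n d (x : 'I_n -> 'rV[R]_d) w k :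
  Pk x w k = \sum_(f : {ffun 'I_k -> 'I_d}) (\sum_i w i * \prod_l x i 0 (f l)) ^+ 2.
Proof.
rewrite -gram_quad; apply: eq_bigr => i _; apply: eq_bigr => j _; by rewrite pow_gram.
Qed.

Lemma Pk_ge0 n d (x : 'I_n -> 'rV[R]_d) w k : 0 <= Pk x w k.
Proof. by rewrite Pk_gram sumr_ge0 // => f _; exact: sqr_ge0. Qed.

Lemma Pk_ker n d (x : 'I_n -> 'rV[R]_d) w k : Pk x w k = 0 ->
  forall j, \sum_i w i * dotv (x j) (x i) ^+ k = 0.
Proof.
rewrite Pk_gram => /gram_ker H j; apply: etrans (H j); apply: eq_bigr => i _.
by rewrite pow_gram.
Qed.


Lemma strict n (t : 'I_n -> 'I_n -> R) (w : 'I_n -> R) :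
  (forall i, t i i = 1) -> (forall i j, i != j -> t i j != 1) ->
  (forall k, (0 < k)%N -> forall j, \sum_i w i * t j i ^+ k = 0) -> forall j, w j = 0.
Proof.
move=> tii tij H j.
pose p : {poly R} := 'X * \prod_(q : 'I_n * 'I_n | q.1 != q.2) ('X - (t q.1 q.2)%:P).
have E : \sum_i w i * p.[t j i] = 0.
  under eq_bigr do rewrite horner_coef mulr_sumr.
  rewrite exchange_big /= big1 // => k _.
  case: (posnP k) => [->|kp].
    by rewrite big1 // => i _; rewrite coefXM /= mul0r mulr0.
  rewrite (eq_bigr (fun i => p`_k * (w i * t j i ^+ k))); last by move=> i _; ring.
  by rewrite -mulr_sumr H // mulr0.
have Z : forall i, j != i -> p.[t j i] = 0.
  move=> i ji; rewrite hornerM horner_prod (bigD1 (j, i)) //= hornerXsubC subrr.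
  by rewrite mul0r mulr0.
have P1 : p.[1] != 0.
  rewrite hornerM hornerX mul1r horner_prod; apply/prodf_neq0 => q hq.
  by rewrite hornerXsubC subr_eq0 eq_sym tij.
move: E; rewrite (bigD1 j) //= big1 ?addr0 => [|i ij]; last by rewrite Z ?mulr0 // eq_sym.
by rewrite tii => /eqP; rewrite mulf_eq0 (negPf P1) orbF => /eqP.
Qed.

Lemma dotvC d (u v : 'rV[R]_d) : dotv u v = dotv v u.
Proof. by apply: eq_bigr => k _; rewrite mulrC. Qed.

Lemma dot_sq d (u v : 'rV[R]_d) (s : R) :
  \sum_k (u 0 k + s * v 0 k) ^+ 2 = dotv u u + s ^+ 2 * dotv v v + 2 * s * dotv u v.
Proof.
rewrite /dotv !mulr_sumr -!big_split /=; apply: eq_bigr => k _; ring.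
Qed.

Lemma dot_bound d (u v : 'rV[R]_d) : on_sphere u -> on_sphere v -> -1 <= dotv u v <= 1.
Proof.
rewrite /on_sphere => hu hv.
have h1 := dot_sq u v 1; have h2 := dot_sq u v (-1).
rewrite hu hv in h1 h2.
have : 0 <= \sum_k (u 0 k + 1 * v 0 k) ^+ 2 by apply: sumr_ge0 => k _; exact: sqr_ge0.
have : 0 <= \sum_k (u 0 k + -1 * v 0 k) ^+ 2 by apply: sumr_ge0 => k _; exact: sqr_ge0.
rewrite h1 h2 => ha hb; apply/andP; split; nra.
Qed.

Lemma dot_eq1 d (u v : 'rV[R]_d) : on_sphere u -> on_sphere v -> dotv u v = 1 -> u = v.
Proof.
rewrite /on_sphere => hu hv h.
have h2 := dot_sq u v (-1); rewrite hu hv h in h2.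
have Z : \sum_k (u 0 k + -1 * v 0 k) ^+ 2 = 0 by rewrite h2; ring.
apply/matrixP => a k; rewrite (ord1 a).
have := psumr_eq0P (fun k _ => sqr_ge0 (u 0 k + -1 * v 0 k)) Z (i := k) isT.
move/eqP; rewrite sqrf_eq0 mulN1r subr_eq0 => /eqP //.
Qed.

Lemma quadE n (A : 'M[R]_n) (v : 'cV[R]_n) :
  (v^T *m A *m v) 0 0 = \sum_i \sum_j v i 0 * v j 0 * A i j.
Proof.
rewrite mxE exchange_big /=; apply: eq_bigr => j _.
rewrite mxE mulr_suml; apply: eq_bigr => i _; rewrite !mxE; ring.
Qed.
End G.

Arguments cc {R} m. Arguments bc {R} m.

Lemma entry_id (R : realType) (M : nat) (t : R) :
  (t + 1) * (pi - acos t) = pi / 2 * (t ^+ 0 + t ^+ 1)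
    + \sum_(m < M) cc m * (t ^+ m.*2.+1 + t ^+ m.*2.+2) + (t + 1) * Psi M t.
Proof.
have -> : \sum_(m < M) cc m * (t ^+ m.*2.+1 + t ^+ m.*2.+2) = (t + 1) * FM M t.
  rewrite /FM mulr_sumr; apply: eq_bigr => m _; rewrite [t ^+ m.*2.+2]exprS; ring.
rewrite /Psi expr0 expr1; by field.
Qed.

Theorem proposition1 (R : realType) (n d : nat) (x : 'I_n -> 'rV[R]_d) :
  (2 <= d)%N ->
  (forall i, on_sphere (x i)) ->
  injective x ->
  symmetric_mx (Hinf x) /\ posdef_mx (Hinf x).
Proof.
move=> _ hs inj; split.
  by apply/matrixP => i j; rewrite !mxE dotvC.
move=> v vn0.
rewrite quadE.
set t := fun i j => dotv (x i) (x j).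
set w := fun i => v i 0.
have tii : forall i, t i i = 1 by move=> i; exact: hs.
have tb : forall i j, -1 <= t i j <= 1 by move=> i j; exact: dot_bound.
have tne : forall i j, i != j -> t i j != 1.
  move=> i j ij; apply/eqP => /(dot_eq1 (hs i) (hs j)) /inj /eqP; by rewrite (negPf ij).
have [j0 wj0] : exists j, w j != 0.
  apply: contra_notP (negP vn0) => H; apply/eqP/matrixP => i k.
  rewrite (ord1 k) mxE; apply/eqP; apply: contra_notT H => H; by exists i.
have [k [kp [j1 Hj]]] : exists k, (0 < k)%N /\ exists j, \sum_i w i * t j i ^+ k != 0.
  apply: contra_notP (negP wj0) => H; apply/eqP; apply: (strict tii tne) => k kp j.
  apply/eqP/negP => Hn; apply: H; exists k; split => //; exists j; exact/negP.
have Pkpos : 0 < Pk x w k.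
  rewrite lt_def Pk_ge0 andbT; apply/eqP => /Pk_ker /(_ j1) E.
  by move: Hj; rewrite /t E eqxx.
have [m0 hm0] : exists m0, k = m0.*2.+1 \/ k = m0.*2.+2.
  exists (k.-1)./2; have := odd_double_half k.-1.
  case: (odd k.-1) => /= e; [right|left]; rewrite -!muln2 in e *; lia.
set d0 := Pk x w m0.*2.+1 + Pk x w m0.*2.+2.
have d0pos : 0 < d0.
  rewrite /d0; have := Pk_ge0 x w m0.*2.+1; have := Pk_ge0 x w m0.*2.+2; case: hm0 => <- ? ?; lra.
set del := cc m0 * d0.
have delpos : 0 < del by apply: mulr_gt0; [exact: cc_gt0 | exact: d0pos].
set r := \big[Num.max/0]_(q : 'I_n * 'I_n | (q.1 != q.2) && (t q.1 q.2 != -1)) `|t q.1 q.2|.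
have r01 : 0 <= r < 1.
  rewrite /r; elim/big_ind: _ => [|a b /andP[a0 a1] /andP[b0 b1]|q /andP[qn qm]].
  - by rewrite lexx ltr01.
  - by rewrite le_max a0 gt_max a1 b1.
  - rewrite normr_ge0 ltr_norml /=.
    have /andP[h3 h4] := tb q.1 q.2; have h2 := tne _ _ qn.
    by rewrite !lt_def qm h3 h4 eq_sym h2.
have rb : forall i j, i != j -> t i j != -1 -> `|t i j| <= r.
  move=> i j ij tm; rewrite /r (bigD1 (i, j)) /= ?ij ?tm // le_max lexx //.
have -> : \sum_i \sum_j v i 0 * v j 0 * Hinf x i j = \sum_i \sum_j w i * w j * Hinf x i j by [].
have pi0 : 0 < pi :> R by exact: pi_gt0.
have key : forall M, 4 * pi * (\sum_i \sum_j w i * w j * Hinf x i j) =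
   pi / 2 * (Pk x w 0 + Pk x w 1) + \sum_(m < M) cc m * (Pk x w m.*2.+1 + Pk x w m.*2.+2)
   + \sum_i \sum_j w i * w j * ((t i j + 1) * Psi M (t i j)).
  move=> M.
  transitivity (\sum_i \sum_j (pi / 2 * (w i * w j * t i j ^+ 0 + w i * w j * t i j ^+ 1)
     + \sum_(m < M) cc m * (w i * w j * t i j ^+ m.*2.+1 + w i * w j * t i j ^+ m.*2.+2)
     + w i * w j * ((t i j + 1) * Psi M (t i j)))).
    rewrite mulr_sumr; apply: eq_bigr => i _; rewrite mulr_sumr; apply: eq_bigr => j _.
    have -> : \sum_(m < M) cc m * (w i * w j * t i j ^+ m.*2.+1 + w i * w j * t i j ^+ m.*2.+2)
       = w i * w j * \sum_(m < M) cc m * (t i j ^+ m.*2.+1 + t i j ^+ m.*2.+2).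
      by rewrite mulr_sumr; apply: eq_bigr => m _; ring.
    rewrite mxE -/(t i j).
    have E := @entry_id R M (t i j).
    have pin : pi != 0 :> R by rewrite gt_eqF.
    rewrite E; move: (\sum_(m < M) _) (Psi M (t i j)) pin => S P; move: (pi : R) => p pn; by field; rewrite pn.
  under eq_bigr do rewrite !big_split /=.
  rewrite !big_split /=; congr (_ + _ + _).
    under eq_bigr do rewrite -mulr_sumr big_split /=.
    by rewrite -mulr_sumr big_split.
  under eq_bigr do rewrite exchange_big /=.
  rewrite exchange_big /=; apply: eq_bigr => m _.
  under eq_bigr do rewrite -mulr_sumr big_split /=.
  by rewrite -mulr_sumr big_split.
set S := \sum_i \sum_j `|w i| * `|w j|.
have S0 : 0 <= S by rewrite sumr_ge0 // => i _; rewrite sumr_ge0 // => j _; rewrite mulr_ge0.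
have [r0 r1] := andP r01.
have B0 : forall M, 0 <= Bnd M r.
  by move=> M; rewrite /Bnd; apply: mulr_ge0; [apply: mulr_ge0; [apply: mulr_ge0; [by []|exact: exprn_ge0]|exact: pi2_ge0]|exact: pi2_ge0].
have Cb : forall M, (0 < M)%N ->
    - (2 * Bnd M r * S) <= \sum_i \sum_j w i * w j * ((t i j + 1) * Psi M (t i j)).
  move=> M M0; rewrite /S mulr_sumr -sumrN; apply: ler_sum => i _.
  rewrite mulr_sumr -sumrN; apply: ler_sum => j _.
  case: (eqVneq i j) => [<-|ij].
    rewrite tii; apply: le_trans (_ : _ <= 0) _.
      by rewrite oppr_le0; apply: mulr_ge0; [apply: mulr_ge0 => //; exact: B0 | exact: mulr_ge0].
    apply: mulr_ge0; first by rewrite -expr2 sqr_ge0.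
    by apply: mulr_ge0; [rewrite addr_ge0 | exact: Psi1_ge0].
  case: (eqVneq (t i j) (-1)) => [->|tm].
    rewrite addNr mul0r mulr0 oppr_le0; apply: mulr_ge0; [apply: mulr_ge0 => //; exact: B0 | exact: mulr_ge0].
  have /andP[ta tb'] := tb i j.
  have hb := Psi_bound M0 ta tb' (rb i j ij tm).
  have h2 : `|t i j + 1| <= 2 by rewrite ger0_norm; lra.
  rewrite lerNl; apply: le_trans (ler_norm _) _; rewrite normrN !normrM.
  rewrite [X in _ <= X]mulrC; apply: ler_wpM2l; first by rewrite mulr_ge0.
  by apply: ler_pM.
set K0 := 4 * (pi / 2) ^+ 2 * S.
have K00 : 0 <= K0 by rewrite mulr_ge0 // mulr_ge0 // exprn_ge0 // pi2_ge0.
set eps := del / (2 * (K0 + 1)).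
have K1 : 0 < K0 + 1 by lra.
have epos : 0 < eps by rewrite divr_gt0 // mulr_gt0.
have [M [mM My]] := @small_seq R r eps m0 r0 r1 epos.
set y := M%:R * r ^+ (M.*2).-1 in My.
have y0 : 0 <= y by rewrite mulr_ge0 // exprn_ge0.
have BndE : 2 * Bnd M r * S = K0 * y.
  rewrite /K0 /y /Bnd -mul2n natrM; ring.
have Bb : del <= \sum_(m < M) cc m * (Pk x w m.*2.+1 + Pk x w m.*2.+2).
  rewrite (bigD1 (Ordinal mM)) //= -/d0 -/del lerDl sumr_ge0 // => m _.
  by rewrite mulr_ge0 ?addr_ge0 ?Pk_ge0 // ltW // cc_gt0.
have Ab : 0 <= pi / 2 * (Pk x w 0 + Pk x w 1) by rewrite mulr_ge0 ?pi2_ge0 ?addr_ge0 ?Pk_ge0.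
have M0 : (0 < M)%N by apply: leq_ltn_trans mM.
have Cb' := Cb M M0.
have E := key M.
have e2 : (K0 + 1) * eps = del / 2 by rewrite /eps; field; rewrite gt_eqF.
have Ky : K0 * y <= K0 * eps by rewrite ler_wpM2l.
rewrite BndE in Cb'.
have : 0 < 4 * pi * (\sum_i \sum_j w i * w j * Hinf x i j) by lra.
by rewrite pmulr_rgt0 // mulr_gt0.
Qed.
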